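(* Let $0<\alpha<\pi/4$ and $0<\beta\le\pi/4$, and consider the system on $S^2$ described in the context. Let $(x,\lambda)$ be a normal bang-bang extremal pair with $x(0)=N=(0,0,1)$, and let $s$, $s+t_1$, $s+t_1+t_2$ (with $t_1,t_2>0$) be three consecutive switching times. Then $(t_1,t_2)\in[0,\pi]^2$.
   Context: The system is $\dot x=Fx+u_1G_1x+u_2G_2x$ on the unit sphere $S^2\subset\mathbb R^3$, measurable controls $|u_i|\le1$, with $F=\cos\alpha\begin{pmatrix}0&-1&0\\1&0&0\\0&0&0\end{pmatrix}$, $G_1=\sin\alpha\sin\beta\begin{pmatrix}0&0&0\\0&0&-1\\0&1&0\end{pmatrix}$, $G_2=\sin\alpha\cos\beta\begin{pmatrix}0&0&-1\\0&0&0\\1&0&0\end{pmatrix}$. An extremal pair: trajectory $x$ with control $u$, Lipschitz row vector $\lambda(t)\in\mathbb R^3$ with $\lambda(t)\cdot x(t)=0$, $\lambda(t)\ne0$, and constant $\lambda_0\le0$, such that a.e. $\dot\lambda=-\lambda(F+u_1G_1+u_2G_2)$, $u(t)$ maximizes $\lambda Fx+u_1\lambda G_1x+u_2\lambda G_2x+\lambda_0$ over $[-1,1]^2$, and the maximum is $0$; normal if $\lambda_0<0$. Bang-bang: finitely many arcs on which $u$ is a.e. constant in $\{-1,1\}^2$; a switching time is a time at which $u_1$ or $u_2$ changes between $+1$ and $-1$. *)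

(* Defs.v *)
From Stdlib Require Import Reals Lra.
Open Scope R_scope.

(* Vectors of R^3 are functions nat -> R (components 0,1,2);
   3x3 matrices are functions nat -> nat -> R. *)
Definition vec3 := nat -> R.
Definition mat3 := nat -> nat -> R.

Definition matvec (M : mat3) (x : vec3) : vec3 :=
  fun i => M i 0%nat * x 0%nat + M i 1%nat * x 1%nat + M i 2%nat * x 2%nat.

Definition rowmat (l : vec3) (M : mat3) : vec3 :=
  fun j => l 0%nat * M 0%nat j + l 1%nat * M 1%nat j + l 2%nat * M 2%nat j.

Definition dot (l x : vec3) : R :=
  l 0%nat * x 0%nat + l 1%nat * x 1%nat + l 2%nat * x 2%nat.

Definition vnonzero (l : vec3) : Prop :=
  l 0%nat <> 0 \/ l 1%nat <> 0 \/ l 2%nat <> 0.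

Definition Fm (a : R) : mat3 := fun i j =>
  cos a * (match i, j with
           | 0%nat, 1%nat => -1
           | 1%nat, 0%nat => 1
           | _, _ => 0 end).

Definition G1m (a b : R) : mat3 := fun i j =>
  sin a * sin b * (match i, j with
                   | 1%nat, 2%nat => -1
                   | 2%nat, 1%nat => 1
                   | _, _ => 0 end).

Definition G2m (a b : R) : mat3 := fun i j =>
  sin a * cos b * (match i, j with
                   | 0%nat, 2%nat => -1
                   | 2%nat, 0%nat => 1
                   | _, _ => 0 end).

Definition Am (a b v1 v2 : R) : mat3 := fun i j =>
  Fm a i j + v1 * G1m a b i j + v2 * G2m a b i j.

Definition Ham (a b : R) (l x : vec3) (lam0 v1 v2 : R) : R :=
  dot l (matvec (Fm a) x) + v1 * dot l (matvec (G1m a b) x)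
  + v2 * dot l (matvec (G2m a b) x) + lam0.

Definition is_sign (c : R) : Prop := c = 1 \/ c = -1.

(* Bang-bang control on [0,T]: finitely many arcs (tau i, tau (i+1)),
   i < n, covering [0,T], on each of which (u1,u2) is constant with values
   in {-1,1}^2.  The pointwise representative of the control is taken
   constant on each open arc (its values at the finitely many junction
   points are only required to satisfy |u_i| <= 1). *)
Definition bang_bang_partition (T : R) (u1 u2 : R -> R)
  (n : nat) (tau : nat -> R) (c1 c2 : nat -> R) : Prop :=
  (0 < n)%nat /\ tau 0%nat = 0 /\ tau n = T /\
  (forall i, (i < n)%nat -> tau i < tau (S i)) /\
  (forall i, (i < n)%nat -> is_sign (c1 i) /\ is_sign (c2 i)) /\
  (forall i t, (i < n)%nat -> tau i < t < tau (S i) ->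
       u1 t = c1 i /\ u2 t = c2 i).

(* Normal bang-bang extremal pair (x, lam) on [0,T] with control (u1,u2)
   and constant multiplier lam0 < 0.  On each open arc the control is
   constant, so the (absolutely continuous / Lipschitz) x and lam are
   smooth there; the differential equations and the maximum condition are
   required on the open arcs (i.e. everywhere except at finitely many
   points, hence a.e.). *)
Definition normal_bang_bang_extremal (a b T : R) (x : R -> vec3)
  (u1 u2 : R -> R) (lam : R -> vec3) (lam0 : R) : Prop :=
  0 < T /\
  lam0 < 0 /\
  (forall t, 0 <= t <= T -> -1 <= u1 t <= 1 /\ -1 <= u2 t <= 1) /\
  (exists n tau c1 c2,
     bang_bang_partition T u1 u2 n tau c1 c2 /\
     (forall i t, (i < n)%nat -> tau i < t < tau (S i) ->
        (forall k, (k < 3)%nat ->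
           derivable_pt_lim (fun s => x s k) t
             (matvec (Am a b (u1 t) (u2 t)) (x t) k)) /\
        (forall k, (k < 3)%nat ->
           derivable_pt_lim (fun s => lam s k) t
             (- rowmat (lam t) (Am a b (u1 t) (u2 t)) k)) /\
        (forall v1 v2, -1 <= v1 <= 1 -> -1 <= v2 <= 1 ->
           Ham a b (lam t) (x t) lam0 v1 v2
             <= Ham a b (lam t) (x t) lam0 (u1 t) (u2 t)) /\
        Ham a b (lam t) (x t) lam0 (u1 t) (u2 t) = 0)) /\
  (forall k, (k < 3)%nat -> forall t, 0 <= t <= T ->
       continuity_pt (fun s => x s k) t) /\
  (forall t, 0 <= t <= T -> dot (x t) (x t) = 1) /\
  (exists K, forall k, (k < 3)%nat -> forall t s, 0 <= t <= T -> 0 <= s <= T ->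
       Rabs (lam t k - lam s k) <= K * Rabs (t - s)) /\
  (forall t, 0 <= t <= T -> dot (lam t) (x t) = 0 /\ vnonzero (lam t)).

Definition switching_time (T : R) (u1 u2 : R -> R) (t : R) : Prop :=
  exists eps, 0 < eps /\ 0 <= t - eps /\ t + eps <= T /\
  exists a1 a2 b1 b2,
    is_sign a1 /\ is_sign a2 /\ is_sign b1 /\ is_sign b2 /\
    (a1 <> b1 \/ a2 <> b2) /\
    (forall r, t - eps < r < t -> u1 r = a1 /\ u2 r = a2) /\
    (forall r, t < r < t + eps -> u1 r = b1 /\ u2 r = b2).

Definition northpole : vec3 := fun i => match i with 2%nat => 1 | _ => 0 end.

(* Main.v *)
Require Import Defs.
From Stdlib Require Import Reals Lra Lia Nsatz.
Open Scope R_scope.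

Lemma cont_eps (f : R -> R) (t : R) :
  (forall eps, 0 < eps -> exists d, 0 < d /\ forall z, Rabs (z - t) < d -> Rabs (f z - f t) < eps) ->
  continuity_pt f t.
Proof.
  intros H eps Heps. destruct (H eps Heps) as [d [Hd Hz]].
  exists d; split; [lra|]. intros z [_ Hz']. simpl in *. unfold R_dist in *. apply Hz; auto.
Qed.

Lemma cont_eps_inv (f : R -> R) (t : R) : continuity_pt f t ->
  forall eps, 0 < eps -> exists d, 0 < d /\ forall z, Rabs (z - t) < d -> Rabs (f z - f t) < eps.
Proof.
  intros H eps Heps. destruct (H eps Heps) as [d [Hd Hz]].
  exists d; split; [lra|]. intros z Hz'.
  destruct (Req_dec z t) as [->|Hne].
  - rewrite Rminus_diag, Rabs_R0; lra.
  - apply (Hz z). split; [split; [exact I| auto] | exact Hz'].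
Qed.

Lemma right_lim_ge0 (g : R -> R) (r dl : R) : 0 < dl -> continuity_pt g r ->
  (forall z, r < z < r + dl -> 0 <= g z) -> 0 <= g r.
Proof.
  intros Hdl Hc Hz. destruct (Rle_or_lt 0 (g r)) as [H|H]; auto.
  destruct (cont_eps_inv g r Hc (- g r) ltac:(lra)) as [d [Hd Hd']].
  set (z := r + Rmin d dl / 2).
  assert (Hm : 0 < Rmin d dl) by (apply Rmin_pos; lra).
  assert (Hm1 : Rmin d dl <= d) by apply Rmin_l.
  assert (Hm2 : Rmin d dl <= dl) by apply Rmin_r.
  assert (H1 : 0 <= g z) by (apply Hz; unfold z; lra).
  assert (H2 : Rabs (g z - g r) < - g r).
  { apply Hd'. unfold z. rewrite Rabs_right; lra. }
  rewrite Rabs_right in H2; lra.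
Qed.

Lemma const_on (g : R -> R) (a b : R) : a <= b ->
  (forall t, a <= t <= b -> continuity_pt g t) ->
  (forall t, a < t < b -> derivable_pt_lim g t 0) -> g b = g a.
Proof.
  intros Hab Hc Hd. destruct (Req_dec a b) as [->|Hne]; [reflexivity|].
  assert (pr : forall t, a < t < b -> derivable_pt g t).
  { intros t Ht. exists 0. apply Hd; auto. }
  pose proof (null_derivative_loc g a b pr Hc) as H.
  assert (H0 : forall (t : R) (P : a < t < b), derive_pt g t (pr t P) = 0).
  { intros t P. apply derive_pt_eq_0. apply Hd; auto. }
  specialize (H H0). unfold constant_D_eq in H. apply H. lra.
Qed.

Lemma pw_const (n : nat) (tau : nat -> R) (g : R -> R) (a b : R) :
  tau 0%nat <= a -> a <= b -> b <= tau n ->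
  (forall t, a <= t <= b -> continuity_pt g t) ->
  (forall i t, (i < n)%nat -> tau i < t < tau (S i) -> a < t < b -> derivable_pt_lim g t 0) ->
  g b = g a.
Proof.
  intros H0 Hab Hbn Hc Hd.
  assert (Hk : forall k, (k <= n)%nat -> forall t, a <= t <= b -> t <= tau k -> g t = g a).
  { induction k as [|k IH]; intros Hkn t Ht Htk.
    - assert (t = a) by lra. subst; reflexivity.
    - destruct (Rle_or_lt t (tau k)) as [Hle|Hlt].
      + apply IH; auto. lia.
      + set (a' := Rmax a (tau k)).
        assert (Ha' : g a' = g a).
        { unfold a'. destruct (Rle_dec a (tau k)) as [Hl|Hl].
          - rewrite Rmax_right by lra. apply IH; [lia|lra|lra].
          - rewrite Rmax_left by lra. reflexivity. }
        rewrite <- Ha'.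
        assert (Ha1 : a <= a') by apply Rmax_l.
        assert (Ha2 : tau k <= a') by apply Rmax_r.
        assert (Ha3 : a' <= t) by (apply Rmax_lub; lra).
        apply const_on; auto.
        * intros z Hz. apply Hc. lra.
        * intros z Hz. apply (Hd k); [lia|lra|lra]. }
  apply (Hk n); [lia|lra|lra].
Qed.

Lemma locate (n : nat) (tau : nat -> R) (r : R) :
  tau 0%nat <= r -> r < tau n -> exists k, (k < n)%nat /\ tau k <= r < tau (S k).
Proof.
  intros H0. induction n as [|n IH]; intros Hn.
  - lra.
  - destruct (Rlt_or_le r (tau n)) as [Hl|Hl].
    + destruct (IH Hl) as [k [Hk1 Hk2]]. exists k; split; [lia|auto].
    + exists n; split; [lia|lra].
Qed.

Lemma dmul f g t df dg : derivable_pt_lim f t df -> derivable_pt_lim g t dg ->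
  derivable_pt_lim (fun s => f s * g s) t (df * g t + f t * dg).
Proof. intros; apply (derivable_pt_lim_mult f g t df dg); auto. Qed.
Lemma dplus f g t df dg : derivable_pt_lim f t df -> derivable_pt_lim g t dg ->
  derivable_pt_lim (fun s => f s + g s) t (df + dg).
Proof. intros; apply (derivable_pt_lim_plus f g t df dg); auto. Qed.
Lemma dminus f g t df dg : derivable_pt_lim f t df -> derivable_pt_lim g t dg ->
  derivable_pt_lim (fun s => f s - g s) t (df - dg).
Proof. intros; apply (derivable_pt_lim_minus f g t df dg); auto. Qed.
Lemma dconst (c t : R) : derivable_pt_lim (fun _ => c) t 0.
Proof. apply derivable_pt_lim_const. Qed.
Lemma dcosc (c t : R) : derivable_pt_lim (fun s => cos (s - c)) t (- sin (t - c)).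
Proof.
  replace (- sin (t - c)) with (- sin (t - c) * 1) by ring.
  apply (derivable_pt_lim_comp (fun s => s - c) cos t 1 (- sin (t - c))).
  - replace 1 with (1 - 0) by ring. apply dminus; [apply derivable_pt_lim_id|apply dconst].
  - apply derivable_pt_lim_cos.
Qed.
Lemma dsinc (c t : R) : derivable_pt_lim (fun s => sin (s - c)) t (cos (t - c)).
Proof.
  replace (cos (t - c)) with (cos (t - c) * 1) by ring.
  apply (derivable_pt_lim_comp (fun s => s - c) sin t 1 (cos (t - c))).
  - replace 1 with (1 - 0) by ring. apply dminus; [apply derivable_pt_lim_id|apply dconst].
  - apply derivable_pt_lim_sin.
Qed.

Lemma final_contra (p q h rho2 B1 A1 B2 A2 : R) :
 0 < p -> 0 < q -> 0 < h -> h*h < rho2 ->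
 h*h*(p*p) < rho2*(1-p*p) -> h*h*(q*q) < rho2*(1-q*q) ->
 A1*A1+B1*B1 = rho2*(1-p*p) -> A2*A2+B2*B2 = rho2*(1-q*q) -> A1*A2+B1*B2 = -rho2*p*q ->
 (forall th, 0<=th<=PI -> 0 <= h*p + B1*cos th + A1*sin th /\ 0 <= h*q + B2*cos th + A2*sin th) -> False.
Proof.
  intros Hp Hq Hh Hr Hr1 Hr2 I1 I2 I3 HF.
  destruct (HF 0) as [F0 G0]; [pose proof PI_RGT_0; lra|].
  destruct (HF PI) as [F1 G1]; [pose proof PI_RGT_0; lra|].
  rewrite cos_0, sin_0 in F0, G0. rewrite cos_PI, sin_PI in F1, G1.
  assert (HB : B1*B2 >= - (h*p)*(h*q)).
  { assert (0 <= (h*p - B1)*(h*q - B2)) by (apply Rmult_le_pos; lra).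
    assert (0 <= (h*p + B1)*(h*q + B2)) by (apply Rmult_le_pos; lra). nra. }
  assert (Hpq : 0 < p*q) by nra.
  assert (HA0 : 0 < p*q*(rho2 - h*h)) by (apply Rmult_lt_0_compat; lra).
  assert (HA : A1*A2 < 0).
  { assert (E : A1*A2 = -rho2*p*q - B1*B2) by lra. rewrite E.
    replace (-rho2*p*q) with (- (p*q*rho2)) by ring. nra. }
  assert (Key : forall pp hp B A, 0 < pp -> 0 < hp -> hp*hp < rho2*(1-pp) ->
     A*A + B*B = rho2*(1-pp) -> A < 0 ->
     (forall th, 0<=th<=PI -> 0 <= hp + B*cos th + A*sin th) -> False).
  { clear -Hr. intros pp hp B A Hpp Hhp Hlt Hsum HAn Hall.
    set (K := sqrt (rho2*(1-pp))).
    assert (HK2 : K*K = rho2*(1-pp)) by (unfold K; apply sqrt_sqrt; nra).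
    assert (HK : 0 < K) by (unfold K; apply sqrt_lt_R0; nra).
    assert (Hb : -1 <= -B/K <= 1).
    { assert (B*B <= K*K) by nra.
      split.
      - apply (Rmult_le_reg_r K); [lra|]. unfold Rdiv. rewrite Rmult_assoc, Rinv_l by lra. nra.
      - apply (Rmult_le_reg_r K); [lra|]. unfold Rdiv. rewrite Rmult_assoc, Rinv_l by lra. nra. }
    set (th := acos (-B/K)).
    assert (Hc : cos th = -B/K) by (apply cos_acos; auto).
    assert (Hs : sin th = -A/K).
    { unfold th. rewrite sin_acos by auto.
      replace (1 - (-B/K)²) with ((-A/K)*(-A/K)).
      - apply sqrt_square. unfold Rdiv. apply Rmult_le_pos; [lra|]. left; apply Rinv_0_lt_compat; lra.
      - unfold Rsqr. assert (HAA : A*A = K*K - B*B) by lra.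
        replace ((-A/K)*(-A/K)) with ((A*A)/(K*K)) by (field; lra). rewrite HAA. field; lra. }
    pose proof (Hall th (acos_bound _)) as H. rewrite Hc, Hs in H.
    replace (hp + B * (- B / K) + A * (- A / K)) with (hp - (A*A+B*B)/K) in H by (field; lra).
    rewrite Hsum, <- HK2 in H.
    replace (K*K/K) with K in H by (field; lra).
    assert (hp*hp < K*K) by lra. nra. }
  destruct (Rlt_or_le A1 0) as [HA1|HA1].
  - apply (Key (p*p) (h*p) B1 A1); auto; try nra.
    intros th Hth; apply HF; auto.
  - assert (A2 < 0) by nra.
    apply (Key (q*q) (h*q) B2 A2); auto; try nra.
    intros th Hth; apply HF; auto.
Qed.

Lemma rot_ids (w0 w1 w2 m0 m1 m2 h : R) :
  w0*w0+w1*w1+w2*w2 = 1 -> h = w0*m0+w1*m1+w2*m2 ->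
  let y0 := m0 - h*w0 in let y1 := m1 - h*w1 in
  let z0 := w1*m2 - w2*m1 in let z1 := w2*m0 - w0*m2 in
  y0*y0 + z0*z0 = (m0*m0+m1*m1+m2*m2 - h*h)*(1 - w0*w0) /\
  y1*y1 + z1*z1 = (m0*m0+m1*m1+m2*m2 - h*h)*(1 - w1*w1) /\
  y0*y1 + z0*z1 = - (m0*m0+m1*m1+m2*m2 - h*h)*(w0*w1).
Proof.
  intros Hw Hh y0 y1 z0 z1. unfold y0, y1, z0, z1. subst h.
  split; [|split]; nsatz.
Qed.

Lemma rot_deriv (w0 w1 w2 m0 m1 m2 M0 M1 M2 C S : R) :
  w0*w0+w1*w1+w2*w2 = 1 ->
  let h := w0*m0+w1*m1+w2*m2 in
  let y0 := m0 - h*w0 in let y1 := m1 - h*w1 in let y2 := m2 - h*w2 in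
  let z0 := w1*m2 - w2*m1 in let z1 := w2*m0 - w0*m2 in let z2 := w0*m1 - w1*m0 in
  let E0 := M0 - (h*w0 + C*y0 + S*z0) in
  let E1 := M1 - (h*w1 + C*y1 + S*z1) in
  let E2 := M2 - (h*w2 + C*y2 + S*z2) in
  2*E0*((w1*M2 - w2*M1) - (-S*y0 + C*z0)) + 2*E1*((w2*M0 - w0*M2) - (-S*y1 + C*z1))
  + 2*E2*((w0*M1 - w1*M0) - (-S*y2 + C*z2)) = 0.
Proof.
  intros Hw h y0 y1 y2 z0 z1 z2 E0 E1 E2.
  unfold E0, E1, E2, y0, y1, y2, z0, z1, z2, h. nsatz.
Qed.

Lemma trig_facts (a b : R) : 0 < a < PI / 4 -> 0 < b <= PI / 4 ->
  0 < sin a /\ sin a * sin a < 1/2 /\ 0 < sin b /\ 0 < cos b /\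
  sin b * sin b + cos b * cos b = 1 /\ sin a * sin a + cos a * cos a = 1.
Proof.
  intros Ha Hb. pose proof PI_RGT_0.
  assert (Hsa : 0 < sin a) by (apply sin_gt_0; lra).
  assert (Hlt : sin a < sin (PI/4)) by (apply sin_increasing_1; lra).
  rewrite sin_PI4 in Hlt.
  assert (Hs2 : sqrt 2 * sqrt 2 = 2) by (apply sqrt_sqrt; lra).
  assert (Hs : 0 < sqrt 2) by (apply sqrt_lt_R0; lra).
  repeat split; auto.
  - assert (sin a * sqrt 2 < 1).
    { apply (Rmult_lt_compat_r (sqrt 2)) in Hlt; auto.
      replace (1 / sqrt 2 * sqrt 2) with 1 in Hlt by (field; lra). lra. }
    nra.
  - apply sin_gt_0; lra.
  - apply cos_gt_0; lra.
  - pose proof (sin2_cos2 b). unfold Rsqr in H0. lra.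
  - pose proof (sin2_cos2 a). unfold Rsqr in H0. lra.
Qed.

Lemma Ham_eq a b (l xv : vec3) lam0 v1 v2 :
  Ham a b l xv lam0 v1 v2 =
  cos a * (xv 0%nat * l 1%nat - xv 1%nat * l 0%nat)
  + v1 * (sin a * sin b) * (xv 1%nat * l 2%nat - xv 2%nat * l 1%nat)
  - v2 * (sin a * cos b) * (xv 2%nat * l 0%nat - xv 0%nat * l 2%nat) + lam0.
Proof. unfold Ham, dot, matvec, Fm, G1m, G2m. simpl. ring. Qed.

Lemma xdot a b v1 v2 (xv : vec3) :
  let w0 := v1 * (sin a * sin b) in let w1 := - v2 * (sin a * cos b) in let w2 := cos a in
  matvec (Am a b v1 v2) xv 0%nat = w1 * xv 2%nat - w2 * xv 1%nat /\
  matvec (Am a b v1 v2) xv 1%nat = w2 * xv 0%nat - w0 * xv 2%nat /\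
  matvec (Am a b v1 v2) xv 2%nat = w0 * xv 1%nat - w1 * xv 0%nat.
Proof. unfold matvec, Am, Fm, G1m, G2m. simpl. repeat split; ring. Qed.

Lemma ldot a b v1 v2 (l : vec3) :
  let w0 := v1 * (sin a * sin b) in let w1 := - v2 * (sin a * cos b) in let w2 := cos a in
  - rowmat l (Am a b v1 v2) 0%nat = w1 * l 2%nat - w2 * l 1%nat /\
  - rowmat l (Am a b v1 v2) 1%nat = w2 * l 0%nat - w0 * l 2%nat /\
  - rowmat l (Am a b v1 v2) 2%nat = w0 * l 1%nat - w1 * l 0%nat.
Proof. unfold rowmat, Am, Fm, G1m, G2m. simpl. repeat split; ring. Qed.

Lemma dval f t l l' : derivable_pt_lim f t l -> l = l' -> derivable_pt_lim f t l'.
Proof. intros H <-; exact H. Qed.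

Lemma sq3 (u v w : R) : u*u + v*v + w*w = 0 -> u = 0 /\ v = 0 /\ w = 0.
Proof.
  intros H. assert (u*u = 0) by nra. assert (v*v = 0) by nra. assert (w*w = 0) by nra.
  repeat split; [destruct (Rmult_integral u u)|destruct (Rmult_integral v v)|destruct (Rmult_integral w w)]; auto.
Qed.

Lemma tau_mono (n : nat) (tau : nat -> R) :
  (forall i, (i < n)%nat -> tau i < tau (S i)) ->
  forall i j, (i <= j)%nat -> (j <= n)%nat -> tau i <= tau j.
Proof.
  intros Hinc i j Hij. induction Hij as [|j Hij IH]; intros Hjn.
  - lra.
  - assert (tau j < tau (S j)) by (apply Hinc; lia). specialize (IH ltac:(lia)). lra.
Qed.

Lemma ctl_const T u1 u2 n tau c1 c2 s0 L :
  bang_bang_partition T u1 u2 n tau c1 c2 ->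
  switching_time T u1 u2 s0 -> (forall r, s0 < r < s0 + L -> ~ switching_time T u1 u2 r) ->
  exists bb1 bb2, is_sign bb1 /\ is_sign bb2 /\
   forall k r, (k<n)%nat -> tau k < r < tau (S k) -> s0 < r < s0 + L -> c1 k = bb1 /\ c2 k = bb2.
Proof.
  intros (Hn & Ht0 & HtN & Hinc & Hsig & Hctl) Hs Hno.
  destruct Hs as (e0 & He0 & He0a & He0b & a1 & a2 & bb1 & bb2 & Ha1 & Ha2 & Hb1 & Hb2 & _ & _ & Hright).
  exists bb1, bb2. split; [auto|split; [auto|]].
  pose proof (tau_mono n tau Hinc) as Hmono.
  assert (FC : forall k, (k<n)%nat -> tau k <= s0 -> s0 < tau (S k) -> c1 k = bb1 /\ c2 k = bb2).
  { intros k Hk Hle Hlt.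
    set (r' := (s0 + Rmin (s0+e0) (tau (S k)))/2).
    assert (H1 : Rmin (s0+e0) (tau (S k)) <= s0 + e0) by apply Rmin_l.
    assert (H2 : Rmin (s0+e0) (tau (S k)) <= tau (S k)) by apply Rmin_r.
    assert (H3 : s0 < Rmin (s0+e0) (tau (S k))) by (apply Rmin_glb_lt; lra).
    destruct (Hright r') as [E1 E2]; [unfold r'; lra|].
    destruct (Hctl k r') as [F1 F2]; [auto|unfold r'; lra|].
    split; congruence. }
  intros k. induction k as [|k IH]; intros r Hk Hr HrJ.
  - apply FC; auto; lra.
  - destruct (Rle_or_lt (tau (S k)) s0) as [Hle|Hlt].
    + apply FC; auto; lra.
    + assert (Hk' : (k < n)%nat) by lia.
      assert (Htk : tau k < tau (S k)) by (apply Hinc; lia).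
      set (r' := (Rmax s0 (tau k) + tau (S k))/2).
      assert (H1 : s0 <= Rmax s0 (tau k)) by apply Rmax_l.
      assert (H2 : tau k <= Rmax s0 (tau k)) by apply Rmax_r.
      assert (H3 : Rmax s0 (tau k) < tau (S k)) by (apply Rmax_lub_lt; lra).
      destruct (IH r' Hk') as [I1 I2]; [unfold r'; lra| unfold r'; lra|].
      assert (Hss : tau (S k) < tau (S (S k))) by (apply Hinc; lia).
      assert (HT : tau (S (S k)) <= T) by (rewrite <- HtN; apply Hmono; lia).
      assert (H0k : 0 <= tau k) by (rewrite <- Ht0; apply Hmono; lia).
      destruct (Req_dec (c1 (S k)) (c1 k)) as [Q1|Q1];
      destruct (Req_dec (c2 (S k)) (c2 k)) as [Q2|Q2];
      try (split; congruence);
      exfalso; apply (Hno (tau (S k))); try lra;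
      (set (ep := Rmin (tau (S k) - tau k) (tau (S (S k)) - tau (S k)));
       assert (P1 : ep <= tau (S k) - tau k) by apply Rmin_l;
       assert (P2 : ep <= tau (S (S k)) - tau (S k)) by apply Rmin_r;
       assert (P3 : 0 < ep) by (apply Rmin_pos; lra);
       exists ep; split; [lra|split; [lra|split; [lra|]]];
       exists (c1 k), (c2 k), (c1 (S k)), (c2 (S k));
       destruct (Hsig k Hk') as [S1 S2]; destruct (Hsig (S k) Hk) as [S3 S4];
       split; [auto|split; [auto|split; [auto|split; [auto|split]]]];
       [ (left; congruence) || (right; congruence)
       | split; [intros z Hz; apply (Hctl k z Hk'); lra
                | intros z Hz; apply (Hctl (S k) z Hk); lra ]]).
Qed.

Lemma cmul f g t : continuity_pt f t -> continuity_pt g t -> continuity_pt (fun s => f s * g s) t.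
Proof. intros; apply (continuity_pt_mult f g t); auto. Qed.
Lemma cplus f g t : continuity_pt f t -> continuity_pt g t -> continuity_pt (fun s => f s + g s) t.
Proof. intros; apply (continuity_pt_plus f g t); auto. Qed.
Lemma cminus f g t : continuity_pt f t -> continuity_pt g t -> continuity_pt (fun s => f s - g s) t.
Proof. intros; apply (continuity_pt_minus f g t); auto. Qed.
Lemma cconst c t : continuity_pt (fun _ => c) t.
Proof. apply continuity_pt_const. intros ? ?; reflexivity. Qed.
Lemma ccosc c t : continuity_pt (fun s => cos (s - c)) t.
Proof. apply derivable_continuous_pt. exists (- sin (t - c)). apply dcosc. Qed.
Lemma csinc c t : continuity_pt (fun s => sin (s - c)) t.
Proof. apply derivable_continuous_pt. exists (cos (t - c)). apply dsinc. Qed.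

Definition clamp (T t : R) := Rmin T (Rmax 0 t).

Lemma clamp_id T t : 0 <= t <= T -> clamp T t = t.
Proof. intros H. unfold clamp, Rmin, Rmax. repeat destruct Rle_dec; lra. Qed.

Lemma clamp_lip T z t : 0 <= T -> Rabs (clamp T z - clamp T t) <= Rabs (z - t).
Proof. intros H. unfold clamp, Rmin, Rmax. repeat destruct Rle_dec; split_Rabs; lra. Qed.

Lemma lip_cont (T K : R) (f : R -> R) : 0 <= T ->
  (forall t s, 0 <= t <= T -> 0 <= s <= T -> Rabs (f t - f s) <= K * Rabs (t - s)) ->
  forall t, continuity_pt (fun s => f (clamp T s)) t.
Proof.
  intros HT HK t. apply cont_eps. intros eps Heps.
  assert (HK1 : 0 < Rabs K + 1) by (pose proof (Rabs_pos K); lra).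
  exists (eps / (Rabs K + 1)). split; [apply Rdiv_lt_0_compat; lra|].
  intros z Hz.
  assert (Hc : forall u, 0 <= clamp T u <= T).
  { intros u. unfold clamp, Rmin, Rmax. repeat destruct Rle_dec; lra. }
  eapply Rle_lt_trans; [apply HK; apply Hc|].
  eapply Rle_lt_trans; [apply Rmult_le_compat_r; [apply Rabs_pos| apply (Rle_abs K)]|].
  eapply Rle_lt_trans; [apply Rmult_le_compat_l; [apply Rabs_pos| apply (clamp_lip T z t HT)]|].
  assert (Rabs K * Rabs (z - t) <= Rabs K * (eps / (Rabs K + 1))).
  { apply Rmult_le_compat_l; [apply Rabs_pos|lra]. }
  assert (Rabs K * (eps / (Rabs K + 1)) < eps).
  { apply (Rmult_lt_reg_r (Rabs K + 1)); [lra|]. field_simplify; lra. }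
  lra.
Qed.
Lemma copp f t : continuity_pt f t -> continuity_pt (fun s => - f s) t.
Proof. intros; apply (continuity_pt_opp f t); auto. Qed.
Lemma clin3 (k1 k2 k3 k4 : R) f g h t : continuity_pt f t -> continuity_pt g t -> continuity_pt h t ->
  continuity_pt (fun r => k1 * f r + k2 * g r - k3 * h r + k4) t.
Proof.
  intros. apply cplus; [apply cminus; [apply cplus|]|apply cconst]; apply cmul; auto; apply cconst.
Qed.
Lemma dopp f t df : derivable_pt_lim f t df -> derivable_pt_lim (fun s => - f s) t (- df).
Proof. intros; apply (derivable_pt_lim_opp f t df); auto. Qed.
Lemma eq0_of (X Y : R) : X = Y -> Y = 0 -> X = 0.
Proof. intros -> ->; reflexivity. Qed.

Lemma lag (sa sb cb c1 c2 l0 l1 : R) : sb*sb+cb*cb = 1 -> c1*c1 = 1 -> c2*c2=1 ->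
  (-(c1*(sa*sb)*l1 + c2*(sa*cb)*l0))*(-(c1*(sa*sb)*l1 + c2*(sa*cb)*l0)) + ((sa*sb)*(c2*l0) - (sa*cb)*(c1*l1))*((sa*sb)*(c2*l0) - (sa*cb)*(c1*l1)) = sa*sa*(l0*l0+l1*l1+0*0).
Proof. intros. nsatz. Qed.

Lemma core (a b : R) (ha : 0 < a < PI / 4) (hb : 0 < b <= PI / 4)
  (T : R) (x : R -> vec3) (u1 u2 : R -> R) (lam : R -> vec3) (lam0 : R)
  (hext : normal_bang_bang_extremal a b T x u1 u2 lam lam0)
  (hx0 : forall k, (k < 3)%nat -> x 0 k = northpole k)
  (s0 L : R) (hL : 0 < L)
  (hs : switching_time T u1 u2 s0) (he : switching_time T u1 u2 (s0 + L))
  (hno : forall r, s0 < r < s0 + L -> ~ switching_time T u1 u2 r) : L <= PI.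
Proof.
  destruct (trig_facts a b ha hb) as (Hsa & Hsa2 & Hsb & Hcb & Hb2 & Ha2).
  destruct hext as (HT & Hl0 & Hadm & (n & tau & c1 & c2 & Hpart & Harc) & Hxc & Hxn & (K & HK) & Hlx).
  pose proof Hpart as Hpart'.
  destruct Hpart' as (Hn & Ht0 & HtN & Hinc & Hsig & Hctl).
  destruct (ctl_const _ _ _ _ _ _ _ s0 L Hpart hs hno) as (bb1 & bb2 & Hbb1 & Hbb2 & HJ).
  destruct hs as (e0 & He0 & He0a & _).
  destruct he as (e1 & He1 & _ & He1b & _).
  pose proof (tau_mono n tau Hinc) as Hmono.
  assert (Harcb : forall i t, (i < n)%nat -> tau i < t < tau (S i) -> 0 < t < T).
  { intros i t Hi Ht. assert (tau 0%nat <= tau i) by (apply Hmono; lia).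
    assert (tau (S i) <= tau n) by (apply Hmono; lia). lra. }
  set (P := sin a * sin b). set (Q := sin a * cos b).
  assert (HP : 0 < P) by (unfold P; nra). assert (HQ : 0 < Q) by (unfold Q; nra).
  pose (lc := fun t k => lam (clamp T t) k).
  assert (Hlc_eq : forall t k, 0 <= t <= T -> lc t k = lam t k).
  { intros t k Ht. unfold lc. rewrite clamp_id; auto. }
  assert (Hlc_cont : forall k, (k < 3)%nat -> forall t, continuity_pt (fun s => lc s k) t).
  { intros k Hk t. apply (lip_cont T K (fun s => lam s k)); [lra|]. intros; apply HK; auto. }
  pose (M0 := fun t => x t 1%nat * lc t 2%nat - x t 2%nat * lc t 1%nat).
  pose (M1 := fun t => x t 2%nat * lc t 0%nat - x t 0%nat * lc t 2%nat).
  pose (M2 := fun t => x t 0%nat * lc t 1%nat - x t 1%nat * lc t 0%nat).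
  assert (HA : forall i t, (i < n)%nat -> tau i < t < tau (S i) ->
     let w0 := c1 i * P in let w1 := - c2 i * Q in let w2 := cos a in
     derivable_pt_lim M0 t (w1 * M2 t - w2 * M1 t) /\
     derivable_pt_lim M1 t (w2 * M0 t - w0 * M2 t) /\
     derivable_pt_lim M2 t (w0 * M1 t - w1 * M0 t) /\
     cos a * M2 t + c1 i * P * M0 t - c2 i * Q * M1 t + lam0 = 0 /\
     0 <= c1 i * M0 t /\ 0 <= - c2 i * M1 t).
  { intros i t Hi Ht w0 w1 w2.
    destruct (Harc i t Hi Ht) as (Hdx & Hdlam & Hmax & Hham).
    destruct (Hctl i t Hi Ht) as [Hu1 Hu2]. rewrite Hu1, Hu2 in *.
    pose proof (Harcb i t Hi Ht) as Hb.
    assert (E : forall k, lc t k = lam t k) by (intros; apply Hlc_eq; lra).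
    assert (Dl : forall k, (k<3)%nat -> derivable_pt_lim (fun s => lc s k) t
                   (- rowmat (lam t) (Am a b (c1 i) (c2 i)) k)).
    { intros k Hk. apply (derivable_pt_lim_locally_ext (fun s => lam s k) _ t 0 T); auto.
      intros z Hz. rewrite Hlc_eq; auto; lra. }
    pose proof (xdot a b (c1 i) (c2 i) (x t)) as X. cbv zeta in X. destruct X as (X0 & X1 & X2).
    pose proof (ldot a b (c1 i) (c2 i) (lam t)) as Y. cbv zeta in Y. destruct Y as (Y0 & Y1 & Y2).
    pose proof (Hdx 0%nat ltac:(lia)) as Dx0. pose proof (Hdx 1%nat ltac:(lia)) as Dx1.
    pose proof (Hdx 2%nat ltac:(lia)) as Dx2.
    pose proof (Dl 0%nat ltac:(lia)) as Dl0. pose proof (Dl 1%nat ltac:(lia)) as Dl1.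
    pose proof (Dl 2%nat ltac:(lia)) as Dl2.
    rewrite X0 in Dx0. rewrite X1 in Dx1. rewrite X2 in Dx2.
    rewrite Y0 in Dl0. rewrite Y1 in Dl1. rewrite Y2 in Dl2.
    assert (Hs1 : c1 i * c1 i = 1) by (destruct (Hsig i Hi) as [[-> | ->] _]; ring).
    assert (Hs2 : c2 i * c2 i = 1) by (destruct (Hsig i Hi) as [_ [-> | ->]]; ring).
    split; [|split; [|split; [|split; [|split]]]].
    - eapply dval; [apply dminus; apply dmul; eauto|].
      unfold M0, M1, M2, w0, w1, w2, P, Q. cbv beta. rewrite !E. ring.
    - eapply dval; [apply dminus; apply dmul; eauto|].
      unfold M0, M1, M2, w0, w1, w2, P, Q. cbv beta. rewrite !E. ring.
    - eapply dval; [apply dminus; apply dmul; eauto|].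
      unfold M0, M1, M2, w0, w1, w2, P, Q. cbv beta. rewrite !E. ring.
    - rewrite Ham_eq in Hham. rewrite <- Hham. unfold M0, M1, M2, P, Q. cbv beta. rewrite !E. ring.
    - destruct (Hsig i Hi) as [S1 S2].
      assert (Hm : Ham a b (lam t) (x t) lam0 (- c1 i) (c2 i) <= Ham a b (lam t) (x t) lam0 (c1 i) (c2 i)).
      { apply Hmax; [destruct S1 as [H|H]|destruct S2 as [H|H]]; rewrite H; lra. }
      rewrite !Ham_eq in Hm.
      assert (H0 : 0 <= P * (c1 i * M0 t)).
      { unfold M0, P. cbv beta. rewrite !E.
        destruct S1 as [H1|H1]; destruct S2 as [H2|H2]; rewrite H1, H2 in Hm; rewrite ?H1, ?H2; lra. }
      nra.
    - destruct (Hsig i Hi) as [S1 S2].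
      assert (Hm : Ham a b (lam t) (x t) lam0 (c1 i) (- c2 i) <= Ham a b (lam t) (x t) lam0 (c1 i) (c2 i)).
      { apply Hmax; [destruct S1 as [H|H]|destruct S2 as [H|H]]; rewrite H; lra. }
      rewrite !Ham_eq in Hm.
      assert (H0 : 0 <= Q * (- c2 i * M1 t)).
      { unfold M1, Q. cbv beta. rewrite !E.
        destruct S1 as [H1|H1]; destruct S2 as [H2|H2]; rewrite H1, H2 in Hm; rewrite ?H1, ?H2; lra. }
      nra. }
  assert (HMc : forall t, 0 <= t <= T -> continuity_pt M0 t /\ continuity_pt M1 t /\ continuity_pt M2 t).
  { intros t Ht.
    pose proof (Hxc 0%nat ltac:(lia) t Ht). pose proof (Hxc 1%nat ltac:(lia) t Ht).
    pose proof (Hxc 2%nat ltac:(lia) t Ht).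
    pose proof (Hlc_cont 0%nat ltac:(lia) t). pose proof (Hlc_cont 1%nat ltac:(lia) t).
    pose proof (Hlc_cont 2%nat ltac:(lia) t).
    unfold M0, M1, M2; repeat split; apply cminus; apply cmul; auto. }
  assert (HDl : forall i t k, (i < n)%nat -> tau i < t < tau (S i) -> (k < 3)%nat ->
    derivable_pt_lim (fun s => lc s k) t (- rowmat (lam t) (Am a b (u1 t) (u2 t)) k)).
  { intros i t k Hi Ht Hk. destruct (Harc i t Hi Ht) as (_ & Hdlam & _).
    pose proof (Harcb i t Hi Ht) as Hb.
    apply (derivable_pt_lim_locally_ext (fun s => lam s k) _ t 0 T); auto.
    intros z Hz. rewrite Hlc_eq; auto; lra. }
  set (h := - lam0).
  set (m2 := lam 0 0%nat * lam 0 0%nat + lam 0 1%nat * lam 0 1%nat + lam 0 2%nat * lam 0 2%nat).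
  assert (Hh0 : h * h <= sin a * sin a * m2).
  { assert (H01 : 0 < tau 1%nat) by (rewrite <- Ht0; apply Hinc; lia).
    set (g0 := fun t => cos a * M2 t + c1 0%nat * P * M0 t - c2 0%nat * Q * M1 t + lam0).
    assert (HT0 : 0 <= 0 <= T) by lra.
    destruct (HMc 0 HT0) as (C0 & C1 & C2).
    assert (Hg0c : continuity_pt g0 0).
    { unfold g0. repeat first [assumption | apply cminus | apply cplus | apply copp | apply cmul | apply cconst]. }
    assert (Hg0z : forall z, 0 < z < 0 + tau 1%nat -> g0 z = 0).
    { intros z Hz. assert (Hzz : tau 0%nat < z < tau 1%nat) by (rewrite Ht0; lra).
      destruct (HA 0%nat z Hn Hzz) as (_ & _ & _ & Hz0 & _).
      unfold g0. exact Hz0. }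
    assert (Hg0 : g0 0 = 0).
    { assert (0 <= g0 0).
      { apply (right_lim_ge0 g0 0 (tau 1%nat)); auto. intros z Hz; rewrite Hg0z; auto; lra. }
      assert (0 <= (fun t => - g0 t) 0).
      { apply (right_lim_ge0 (fun t => - g0 t) 0 (tau 1%nat)); auto.
        - apply (continuity_pt_opp g0 0 Hg0c).
        - intros z Hz; cbv beta; rewrite Hg0z; auto; lra. }
      cbv beta in *. lra. }
    unfold g0, M0, M1, M2 in Hg0. cbv beta in Hg0.
    rewrite !Hlc_eq in Hg0 by lra.
    rewrite (hx0 0%nat), (hx0 1%nat), (hx0 2%nat) in Hg0 by lia. unfold northpole in Hg0.
    destruct (Hlx 0 HT0) as [Hd _]. unfold dot in Hd.
    rewrite (hx0 0%nat), (hx0 1%nat), (hx0 2%nat) in Hd by lia. unfold northpole in Hd.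
    assert (Hl2 : lam 0 2%nat = 0) by lra.
    assert (Hs1 : c1 0%nat * c1 0%nat = 1) by (destruct (Hsig 0%nat Hn) as [[-> | ->] _]; ring).
    assert (Hs2 : c2 0%nat * c2 0%nat = 1) by (destruct (Hsig 0%nat Hn) as [_ [-> | ->]]; ring).
    assert (Hhe : h = - (c1 0%nat * P * lam 0 1%nat + c2 0%nat * Q * lam 0 0%nat)) by (unfold h; lra).
    assert (Hlag : h * h + (P*(c2 0%nat * lam 0 0%nat) - Q*(c1 0%nat * lam 0 1%nat))*(P*(c2 0%nat * lam 0 0%nat) - Q*(c1 0%nat * lam 0 1%nat)) = sin a * sin a * m2).
    { unfold m2. rewrite Hl2. rewrite Hhe. unfold P, Q. apply lag; auto. }
    assert (0 <= (P*(c2 0%nat * lam 0 0%nat) - Q*(c1 0%nat * lam 0 1%nat))*(P*(c2 0%nat * lam 0 0%nat) - Q*(c1 0%nat * lam 0 1%nat))) by apply Rle_0_sqr. lra. }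
  set (N := fun t => lc t 0%nat * lc t 0%nat + lc t 1%nat * lc t 1%nat + lc t 2%nat * lc t 2%nat).
  assert (HN : forall t, 0 <= t <= T -> N t = m2).
  { intros t Ht. transitivity (N 0).
    - apply (pw_const n tau N 0 t); [rewrite Ht0; lra | lra | rewrite HtN; lra | |].
      + intros z Hz. unfold N.
        pose proof (Hlc_cont 0%nat ltac:(lia) z). pose proof (Hlc_cont 1%nat ltac:(lia) z).
        pose proof (Hlc_cont 2%nat ltac:(lia) z).
        repeat first [assumption | apply cplus | apply cmul].
      + intros i z Hi Hz _. pose proof (Harcb i z Hi Hz) as Hb.
        eapply dval; [apply dplus; [apply dplus|]; apply dmul; apply (HDl i); auto; lia |].
        unfold rowmat, Am, Fm, G1m, G2m; simpl. rewrite !Hlc_eq by lra. ring.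
    - unfold N, m2. rewrite !Hlc_eq by lra. reflexivity. }
  assert (Hs0 : 0 < s0) by lra. assert (HsL : s0 + L < T) by lra.
  assert (HexJ : forall g, (forall r, s0 < r < s0+L -> continuity_pt g r) ->
     (forall i r, (i<n)%nat -> tau i < r < tau (S i) -> s0 < r < s0+L -> 0 <= g r) ->
     forall r, s0 < r < s0+L -> 0 <= g r).
  { intros g Hgc Hg r Hr.
    destruct (locate n tau r) as (k & Hk & Hkr); [rewrite Ht0; lra | rewrite HtN; lra |].
    assert (Hm1 : Rmin (tau (S k)) (s0+L) <= tau (S k)) by apply Rmin_l.
    assert (Hm2 : Rmin (tau (S k)) (s0+L) <= s0 + L) by apply Rmin_r.
    assert (Hm3 : r < Rmin (tau (S k)) (s0+L)) by (apply Rmin_glb_lt; lra).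
    apply (right_lim_ge0 g r (Rmin (tau (S k)) (s0+L) - r)); [lra | apply Hgc; auto |].
    intros z Hz. apply (Hg k); auto; lra. }
  assert (HJF : forall r, s0 < r < s0+L -> 0 <= bb1 * M0 r /\ 0 <= - bb2 * M1 r /\
     cos a * M2 r + bb1 * P * M0 r - bb2 * Q * M1 r + lam0 = 0).
  { intros r Hr.
    assert (HMJ : forall z, s0 < z < s0 + L -> continuity_pt M0 z /\ continuity_pt M1 z /\ continuity_pt M2 z)
      by (intros z Hz; apply HMc; lra).
    split; [|split].
    - apply (HexJ (fun r => bb1 * M0 r)); auto.
      + intros z Hz. destruct (HMJ z Hz) as (? & ? & ?). repeat first [assumption | apply cmul | apply cconst].
      + intros i z Hi Hz HzJ. destruct (HA i z Hi Hz) as (_ & _ & _ & _ & H1 & _).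
        destruct (HJ i z Hi Hz HzJ) as [Q1 Q2]. rewrite <- Q1; exact H1.
    - apply (HexJ (fun r => - bb2 * M1 r)); auto.
      + intros z Hz. destruct (HMJ z Hz) as (? & ? & ?). repeat first [assumption | apply cmul | apply cconst].
      + intros i z Hi Hz HzJ. destruct (HA i z Hi Hz) as (_ & _ & _ & _ & _ & H1).
        destruct (HJ i z Hi Hz HzJ) as [Q1 Q2]. rewrite <- Q2; exact H1.
    - assert (G1 : 0 <= (fun r => cos a * M2 r + bb1 * P * M0 r - bb2 * Q * M1 r + lam0) r).
      { apply (HexJ (fun r => cos a * M2 r + bb1 * P * M0 r - bb2 * Q * M1 r + lam0)); auto.
        + intros z Hz. destruct (HMJ z Hz) as (? & ? & ?).
          apply clin3; auto.
        + intros i z Hi Hz HzJ. destruct (HA i z Hi Hz) as (_ & _ & _ & H1 & _).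
          destruct (HJ i z Hi Hz HzJ) as [Q1 Q2]. rewrite <- Q1, <- Q2, H1; lra. }
      assert (G2 : 0 <= (fun r => - (cos a * M2 r + bb1 * P * M0 r - bb2 * Q * M1 r + lam0)) r).
      { apply (HexJ (fun r => - (cos a * M2 r + bb1 * P * M0 r - bb2 * Q * M1 r + lam0))); auto.
        + intros z Hz. destruct (HMJ z Hz) as (? & ? & ?).
          apply copp; apply clin3; auto.
        + intros i z Hi Hz HzJ. destruct (HA i z Hi Hz) as (_ & _ & _ & H1 & _).
          destruct (HJ i z Hi Hz HzJ) as [Q1 Q2]. rewrite <- Q1, <- Q2, H1; lra. }
      cbv beta in G1, G2. lra. }
  destruct (Rle_or_lt L PI) as [HLe|HLt]; [exact HLe|exfalso].
  set (c := s0 + (L - PI)/2).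
  assert (Hc : s0 < c /\ c + PI < s0 + L) by (unfold c; lra).
  assert (HPI := PI_RGT_0).
  set (m0 := M0 c). set (m1 := M1 c). set (m2' := M2 c).
  set (w0 := bb1 * P). set (w1 := - bb2 * Q). set (w2 := cos a).
  assert (Hbs1 : bb1 * bb1 = 1) by (destruct Hbb1 as [-> | ->]; ring).
  assert (Hbs2 : bb2 * bb2 = 1) by (destruct Hbb2 as [-> | ->]; ring).
  assert (Hw : w0*w0+w1*w1+w2*w2 = 1).
  { unfold w0, w1, w2, P, Q. clear - Hbs1 Hbs2 Hb2 Ha2. nsatz. }
  destruct (HJF c ltac:(lra)) as (_ & _ & Hhc).
  assert (Hhh : h = w0*m0 + w1*m1 + w2*m2') by (unfold h, w0, w1, w2, m0, m1, m2'; lra).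
  pose (R0 := fun t => h*w0 + cos (t - c) * (m0 - h*w0) + sin (t - c) * (w1*m2' - w2*m1)).
  pose (R1 := fun t => h*w1 + cos (t - c) * (m1 - h*w1) + sin (t - c) * (w2*m0 - w0*m2')).
  pose (R2 := fun t => h*w2 + cos (t - c) * (m2' - h*w2) + sin (t - c) * (w0*m1 - w1*m0)).
  pose (g := fun t => (M0 t - R0 t)*(M0 t - R0 t) + (M1 t - R1 t)*(M1 t - R1 t) + (M2 t - R2 t)*(M2 t - R2 t)).
  assert (Hgz : forall t, c <= t <= c + PI -> g t = 0).
  { intros t Ht. transitivity (g c).
    - apply (pw_const n tau g c t); [rewrite Ht0; lra | lra | rewrite HtN; lra | |].
      + intros z Hz. destruct (HMc z ltac:(lra)) as (C0 & C1 & C2).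
        pose proof (ccosc c z). pose proof (csinc c z).
        unfold g, R0, R1, R2.
        repeat first [assumption | apply cminus | apply cplus | apply copp | apply cmul | apply cconst].
      + intros i z Hi Hz Hcz. pose proof (HA i z Hi Hz) as HAz; cbv zeta in HAz; destruct HAz as (D0 & D1 & D2 & _).
        destruct (HJ i z Hi Hz) as [Q1 Q2]; [lra|]. rewrite Q2 in D0. rewrite Q1 in D1. rewrite Q1, Q2 in D2.
        fold w0 w1 w2 in D0, D1, D2.
        pose proof (dcosc c z) as Dc. pose proof (dsinc c z) as Ds.
        eapply dval.
        { unfold g, R0, R1, R2.
          repeat first [exact D0 | exact D1 | exact D2 | exact Dc | exact Ds | apply dconst | apply dminus
                       | apply dplus | apply dminus | apply dmul | apply dopp]. }
        pose proof (rot_deriv w0 w1 w2 m0 m1 m2' (M0 z) (M1 z) (M2 z) (cos (z - c)) (sin (z - c)) Hw) as RD.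
        cbv zeta in RD. eapply eq0_of; [|exact RD]. rewrite Hhh. ring.
    - unfold g, R0, R1, R2. replace (c - c) with 0 by ring. rewrite cos_0, sin_0.
      unfold m0, m1, m2'. ring. }
  assert (Hnorm : m0*m0 + m1*m1 + m2'*m2' = m2).
  { rewrite <- (HN c) by lra. destruct (Hlx c) as [Ho _]; [lra|]. pose proof (Hxn c ltac:(lra)) as Hx1.
    unfold m0, m1, m2', M0, M1, M2, N. rewrite !Hlc_eq by lra. unfold dot in Ho, Hx1.
    transitivity ((x c 0%nat * x c 0%nat + x c 1%nat * x c 1%nat + x c 2%nat * x c 2%nat)
       * (lam c 0%nat * lam c 0%nat + lam c 1%nat * lam c 1%nat + lam c 2%nat * lam c 2%nat)
       - (lam c 0%nat * x c 0%nat + lam c 1%nat * x c 1%nat + lam c 2%nat * x c 2%nat)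
       * (lam c 0%nat * x c 0%nat + lam c 1%nat * x c 1%nat + lam c 2%nat * x c 2%nat)); [ring|].
    rewrite Hx1, Ho. ring. }
  assert (Hhp : 0 < h) by (unfold h; lra).
  assert (Hm2 : 0 < m2).
  { destruct (Rle_or_lt m2 0) as [H|H]; auto. assert (sin a * sin a * m2 <= 0) by nra. nra. }
  assert (HPP : P*P <= sin a * sin a).
  { unfold P. assert (sin b * sin b <= 1) by nra. nra. }
  assert (HQQ : Q*Q <= sin a * sin a).
  { unfold Q. assert (cos b * cos b <= 1) by nra. nra. }
  assert (Hsm : sin a * sin a * m2 < 1/2 * m2) by (apply Rmult_lt_compat_r; lra).
  assert (HPm : (sin a * sin a + P*P) * m2 < 1 * m2) by (apply Rmult_lt_compat_r; lra).
  assert (HQm : (sin a * sin a + Q*Q) * m2 < 1 * m2) by (apply Rmult_lt_compat_r; lra).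
  pose proof (rot_ids w0 w1 w2 m0 m1 m2' h Hw Hhh) as RI. cbv zeta in RI. destruct RI as (I1 & I2 & I3).
  rewrite Hnorm in I1, I2, I3.
  assert (Hw0 : w0 * w0 = P * P) by (unfold w0; transitivity (bb1*bb1*(P*P)); [ring|rewrite Hbs1; ring]).
  assert (Hw1 : w1 * w1 = Q * Q) by (unfold w1; transitivity (bb2*bb2*(Q*Q)); [ring|rewrite Hbs2; ring]).
  apply (final_contra P Q h (m2 - h*h) (bb1*(m0 - h*w0)) (bb1*(w1*m2' - w2*m1))
           (-bb2*(m1 - h*w1)) (-bb2*(w2*m0 - w0*m2'))); auto.
  - lra.
  - assert (h*h < m2*(1-P*P)) by lra. nra.
  - assert (h*h < m2*(1-Q*Q)) by lra. nra.
  - transitivity (bb1*bb1*((m0-h*w0)*(m0-h*w0) + (w1*m2'-w2*m1)*(w1*m2'-w2*m1))); [ring|].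
    rewrite Hbs1, I1, Hw0. ring.
  - transitivity (bb2*bb2*((m1-h*w1)*(m1-h*w1) + (w2*m0-w0*m2')*(w2*m0-w0*m2'))); [ring|].
    rewrite Hbs2, I2, Hw1. ring.
  - transitivity (- (bb1*bb2)*((m0-h*w0)*(m1-h*w1) + (w1*m2'-w2*m1)*(w2*m0-w0*m2'))); [ring|].
    rewrite I3. unfold w0, w1.
    transitivity ((bb1*bb1)*(bb2*bb2)*(-(m2-h*h)*P*Q)); [ring|]. rewrite Hbs1, Hbs2. ring.
  - intros th Hth.
    assert (Hg := Hgz (c + th) ltac:(lra)). unfold g in Hg.
    destruct (sq3 _ _ _ Hg) as (E0 & E1 & _).
    destruct (HJF (c + th) ltac:(lra)) as (F0 & F1 & _).
    assert (EM0 : M0 (c + th) = R0 (c + th)) by lra.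
    assert (EM1 : M1 (c + th) = R1 (c + th)) by lra.
    rewrite EM0 in F0. rewrite EM1 in F1. unfold R0, R1 in F0, F1.
    replace (c + th - c) with th in F0, F1 by ring.
    split.
    + replace (h*P) with (bb1*bb1*(h*P)) by (rewrite Hbs1; ring). unfold w0 in F0 |- *.
      replace (bb1 * bb1 * (h * P) + bb1 * (m0 - h * (bb1 * P)) * cos th + bb1 * (w1 * m2' - w2 * m1) * sin th)
        with (bb1 * (h * (bb1 * P) + cos th * (m0 - h * (bb1 * P)) + sin th * (w1 * m2' - w2 * m1))) by ring.
      exact F0.
    + replace (h*Q) with (bb2*bb2*(h*Q)) by (rewrite Hbs2; ring). unfold w1 in F1 |- *.
      replace (bb2 * bb2 * (h * Q) + - bb2 * (m1 - h * (- bb2 * Q)) * cos th + - bb2 * (w2 * m0 - w0 * m2') * sin th)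
        with (- bb2 * (h * (- bb2 * Q) + cos th * (m1 - h * (- bb2 * Q)) + sin th * (w2 * m0 - w0 * m2'))) by ring.
      exact F1.
Qed.

Theorem lemma8 (a b : R) (ha : 0 < a < PI / 4) (hb : 0 < b <= PI / 4)
  (T : R) (x : R -> vec3) (u1 u2 : R -> R) (lam : R -> vec3) (lam0 : R)
  (hext : normal_bang_bang_extremal a b T x u1 u2 lam lam0)
  (hx0 : forall k, (k < 3)%nat -> x 0 k = northpole k)
  (s t1 t2 : R) (ht1 : 0 < t1) (ht2 : 0 < t2)
  (hs0 : switching_time T u1 u2 s)
  (hs1 : switching_time T u1 u2 (s + t1))
  (hs2 : switching_time T u1 u2 (s + t1 + t2))
  (hcons : forall r, s < r < s + t1 + t2 -> r <> s + t1 ->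
             ~ switching_time T u1 u2 r) :
  0 <= t1 <= PI /\ 0 <= t2 <= PI.
Proof.
  split; split; try lra.
  - apply (core a b ha hb T x u1 u2 lam lam0 hext hx0 s t1 ht1 hs0 hs1).
    intros r Hr. apply hcons; lra.
  - apply (core a b ha hb T x u1 u2 lam lam0 hext hx0 (s + t1) t2 ht2 hs1 hs2).
    intros r Hr. apply hcons; lra.
Qed.
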